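(* Let $n\ge2$ and $\mu=2^{n-1}1$. Then $\operatorname{im}(\eta)\subseteq\operatorname{im}(\varphi)$ as subspaces of $\tilde M^{\mu}\cong V_{n,3}$.
   Context: All vector spaces are over $\mathbb C$. A tableau of shape $\lambda\vdash N$ uses each element of $[N]$ once; $C_t$ is its column stabilizer; $\tilde M^\lambda$ is the span of column tabloids $[t]$ modulo $[t]=\operatorname{sgn}(\beta)[\beta t]$, $\beta\in C_t$, with $S_N$ acting by $\sigma[t]=[\sigma t]$. For a column $c$ and $1\le \ell\le$ (length of column $c+1$), $\pi^{\ell}_{c,1}([t])$ is the sum, over all entries $x$ of column $c$ of $t$, of the column tabloids $[t']$ with $t'$ obtained from $t$ by swapping $x$ with the $\ell$-th entry of column $c+1$. For $\mu=2^{m}1^{n-m}$ (columns of lengths $n,m$), $\eta([t])=m[t]-\sum_{j=1}^m\pi^j_{1,1}([t])$; here $m=n-1$. $V_{n,3}$ is the $\mathbb C$-span of left-comb brackets $[[x_1,\dots,x_n],y_1,\dots,y_{n-1}]$ with $\{x_i\}\cup\{y_j\}=[2n-1]$, modulo antisymmetry in the $x$'s and separately in the $y$'s; it is identified with $\tilde M^{2^{n-1}1}$ by sending such a bracket to the column tabloid with first column the $x$'s and second column the $y$'s. The map $\varphi:V_{n,3}\to V_{n,3}$ is $\varphi([[x_1,\dots,x_n],y_1,\dots,y_{n-1}])=[[x_1,\dots,x_n],y_1,\dots,y_{n-1}]-\sum_{i=1}^n(-1)^{n-i}[[y_1,\dots,y_{n-1},x_i],x_1,\dots,\widehat{x_i},\dots,x_n]$.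 *)

(* Defs.v *)
From HB Require Import structures.
From mathcomp Require Import all_boot all_order all_algebra all_fingroup all_field.
Set Implicit Arguments. Unset Strict Implicit. Unset Printing Implicit Defensive.
Import GRing.Theory Num.Theory.
Local Open Scope ring_scope.

(* Shape mu = 2^{n-1} 1 of N = 2n-1 : first column of length n, second of
   length n-1.  We write N n := (n.-1 + n.-1).+1, which is 2n-1 for n >= 1.
   Cells are numbered by 'I_(N n): cells 0..n-1 are the first column (top to
   bottom), cells n..2n-2 are the second column (top to bottom).
   The entries [N] = {1..N} are represented by 'I_(N n) (shifted by one).
   A tableau t is a bijection cells -> entries, i.e. a permutation:
   t k = entry in cell k. *)
Definition N (n : nat) : nat := (n.-1 + n.-1).+1.
Definition tableau (n : nat) := {perm 'I_(N n)}.

Definition col (n : nat) (k : 'I_(N n)) : bool := (n <= k)%N.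

(* Action of sigma in S_N on tableaux: (sigma t) k = sigma (t k).
   In mathcomp (s * t) x = t (s x), hence sigma t = (t * sigma)%g. *)
Definition act (n : nat) (sigma : {perm 'I_(N n)}) (t : tableau n) : tableau n :=
  (t * sigma)%g.

(* beta belongs to the column stabilizer C_t: beta maps the entries of each
   column of t to entries of the same column of t. *)
Definition colstab (n : nat) (t : tableau n) (beta : {perm 'I_(N n)}) : bool :=
  [forall k : 'I_(N n), col ((t^-1)%g (beta (t k))) == col k].

(* Free vector space over C (algC) on tableaux; column tabloids [t] are the
   images of the basis vectors e t in the quotient by the relations below. *)
Definition FV (n : nat) := {ffun tableau n -> algC^o}.
Definition e (n : nat) (t : tableau n) : FV n := [ffun s => (s == t)%:R].

(* The defining relations of \tilde M^mu: [t] = sgn(beta) [beta t]. *)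
Definition rel (n : nat) (t : tableau n) (beta : {perm 'I_(N n)}) : FV n :=
  e t - (-1) ^+ (odd_perm beta) *: e (act beta t).

Definition cell1 (n : nat) (k : nat) : 'I_(N n) := inord k.        (* column 1, row k (0-based) *)
Definition cell2 (n : nat) (j : nat) : 'I_(N n) := inord (n + j).  (* column 2, row j (0-based) *)

Definition swap (n : nat) (t : tableau n) (a b : 'I_(N n)) : tableau n :=
  (tperm a b * t)%g.

(* pi^{l}_{1,1} (l = j+1) lifted to tableaux *)
Definition pi11 (n : nat) (j : nat) (t : tableau n) : FV n :=
  \sum_(k < n) e (swap t (cell1 n k) (cell2 n j)).

Definition eta (n : nat) (t : tableau n) : FV n :=
  (n.-1)%:R *: e t - \sum_(j < n.-1) pi11 j t.

(* Build a permutation from a function (used only on injective functions). *)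
Definition perm_or1 (T : finType) (f : T -> T) : {perm T} :=
  match injectiveb f as b return injectiveb f = b -> {perm T} with
  | true => fun H => perm (injectiveP f H)
  | false => fun _ => 1%g
  end erefl.

(* For i (0-based, i < n), the tableau of
   [[y_1,...,y_{n-1}, x_{i+1}], x_1,...,\hat{x_{i+1}},...,x_n]
   where t = [[x_1..x_n], y_1..y_{n-1}].  New cell k receives the entry of
   old cell gamma_nat n i k. *)
Definition gamma_nat (n i k : nat) : nat :=
  if (k < n.-1)%N then (n + k)%N
  else if k == n.-1 then i
  else if (k - n < i)%N then (k - n)%N else (k - n).+1.

Definition gamma (n i : nat) : {perm 'I_(N n)} :=
  perm_or1 (fun k : 'I_(N n) => (inord (gamma_nat n i k) : 'I_(N n))).

Definition phiT (n : nat) (t : tableau n) (i : nat) : tableau n :=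
  (gamma n i * t)%g.

Definition phi (n : nat) (t : tableau n) : FV n :=
  e t - \sum_(i < n) (-1) ^+ (n.-1 - i) *: e (phiT t i).

(* v lies in  span{phi(s)} + R, i.e. its class in \tilde M^mu = FV/R lies in
   im(phi). *)
Definition in_im_phi_mod_rel (n : nat) (v : FV n) : Prop :=
  exists (c : {ffun tableau n -> algC})
         (d : {ffun tableau n * {perm 'I_(N n)} -> algC}),
    v = \sum_s c s *: phi s
        + \sum_(p : tableau n * {perm 'I_(N n)} | colstab p.1 p.2) d p *: rel p.1 p.2.

(* Main.v *)
Require Import Defs.
From mathcomp Require Import all_boot all_order all_algebra all_fingroup all_field.
From mathcomp Require Import zify ring.
Set Implicit Arguments. Unset Strict Implicit. Unset Printing Implicit Defensive.

Lemma perm_or1E (T : finType) (f : T -> T) : injective f -> forall x, perm_or1 f x = f x.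
Proof.
move=> inj x; have H : injectiveb f by apply/injectiveP.
rewrite /perm_or1; move: (erefl (injectiveb f)); rewrite {2 3}H => ?.
by rewrite permE.
Qed.

Ltac splitifs :=
  repeat match goal with
  | |- context [if ?b then _ else _] =>
      lazymatch b with
      | context [if _ then _ else _] => fail
      | true => fail | false => fail
      | _ => case: (boolP b) => ?
      end
  | |- context [if true then _ else _] => rewrite /=
  | |- context [if false then _ else _] => rewrite /=
  end.

Definition mkP n (f : nat -> nat) : {perm 'I_(N n)} :=
  perm_or1 (fun c : 'I_(N n) => (inord (f c) : 'I_(N n))).

Lemma mkPE n f : (forall c, c < N n -> f c < N n) ->
  (forall c1 c2, c1 < N n -> c2 < N n -> f c1 = f c2 -> c1 = c2) ->
  forall c : 'I_(N n), val (mkP n f c) = f c.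
Proof.
move=> Hr Hi c; rewrite /mkP perm_or1E.
  by rewrite /= inordK //; apply: Hr.
move=> c1 c2 /(congr1 val); rewrite /= !inordK ?Hr // => /Hi H; apply: val_inj; exact: H.
Qed.

Definition cycf (a b c : nat) : nat :=
  if (a <= c) && (c < b) then c.+1 else if c == b then a else c.
Definition cyc n a b := mkP n (cycf a b).

Lemma cycE n a b (c : 'I_(N n)) : a <= b -> b < N n -> val (cyc n a b c) = cycf a b c.
Proof.
move=> hab hb; apply: mkPE => [x hx|x y hx hy]; rewrite /cycf; splitifs; lia.
Qed.

Lemma gammaE n i (c : 'I_(N n)) : 1 < n -> i < n -> val (gamma n i c) = gamma_nat n i c.
Proof.
move=> hn hi; apply: (@mkPE n (gamma_nat n i)) => [x hx|x y hx hy].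
  rewrite /gamma_nat /N in hx *; splitifs; lia.
rewrite /gamma_nat /N in hx hy *; splitifs; lia.
Qed.

Lemma tpermN n (a b : nat) (z : 'I_(N n)) : a < N n -> b < N n ->
  val (tperm (inord a : 'I_(N n)) (inord b) z) =
  if val z == a then b else if val z == b then a else val z.
Proof.
move=> ha hb; case: tpermP => [->|->|/eqP na /eqP nb]; rewrite /= ?inordK //.
- by rewrite eqxx.
- by rewrite eqxx; case: eqP.
- have na' : val z != a by apply: contra na => /eqP E; apply/eqP/val_inj; rewrite /= inordK.
  have nb' : val z != b by apply: contra nb => /eqP E; apply/eqP/val_inj; rewrite /= inordK.
  by rewrite (negbTE na') (negbTE nb').
Qed.

Lemma odd_cyc n d : forall a b, b - a = d -> a <= b -> b < N n ->
  odd_perm (cyc n a b) = odd d.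
Proof.
elim: d => [|d IH] a b hd hab hb.
  have -> : cyc n a b = 1%g.
    apply/permP => c; apply/val_inj; rewrite cycE // perm1 /cycf; splitifs; simpl; lia.
  by rewrite odd_perm1.
have -> : cyc n a b = (cyc n a.+1 b * tperm (inord a : 'I_(N n)) (inord a.+1))%g.
  apply/permP => c; apply/val_inj; rewrite permM tpermN; try lia.
  rewrite !cycE; try lia. rewrite /cycf; have := ltn_ord c; splitifs; simpl; lia.
rewrite odd_permM (IH a.+1 b) ?odd_tperm; try lia.
have -> : (inord a : 'I_(N n)) != inord a.+1.
  apply/eqP => /(congr1 val); rewrite /= !inordK; rewrite /N in hb; lia.
by rewrite addbT.
Qed.

Lemma gg_last n i : 1 < n -> i < n ->
  (gamma n n.-1 * gamma n i)%g = cyc n i n.-1.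
Proof.
move=> hn hi; apply/permP => c; apply/val_inj.
rewrite permM gammaE // gammaE; try lia. rewrite cycE /N; try lia.
rewrite /gamma_nat /cycf; have := ltn_ord c; rewrite /N; splitifs; simpl; lia.
Qed.

Lemma gg_mid n i k : 1 < n -> i < n -> k < n.-1 ->
  (gamma n k * gamma n i)%g =
  (cyc n i n.-1 * cyc n (n + k) (n.-1 + n.-1) * tperm (cell1 n i) (cell2 n k))%g.
Proof.
move=> hn hi hk; apply/permP => c; apply/val_inj.
rewrite !permM /cell1 /cell2 tpermN /N; try lia.
rewrite gammaE // gammaE; try lia. rewrite cycE /N; try lia. rewrite cycE /N; try lia.
rewrite /gamma_nat /cycf; have := ltn_ord c; rewrite /N; splitifs; simpl; lia.
Qed.
Import GRing.Theory Num.Theory.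
Local Open Scope ring_scope.

Definition inR n (v : FV n) := exists d : {ffun tableau n * {perm 'I_(N n)} -> algC},
  v = \sum_(p : tableau n * {perm 'I_(N n)} | colstab p.1 p.2) d p *: Defs.rel p.1 p.2.

Lemma inR0 n : inR (0 : FV n).
Proof. exists 0; by rewrite big1 // => p _; rewrite ffunE scale0r. Qed.

Lemma inRD n (v w : FV n) : inR v -> inR w -> inR (v + w).
Proof.
move=> [d1 ->] [d2 ->]; exists (d1 + d2); rewrite -big_split /=.
by apply: eq_bigr => p _; rewrite ffunE scalerDl.
Qed.

Lemma inRZ n a (v : FV n) : inR v -> inR (a *: v).
Proof.
move=> [d ->]; exists [ffun p => a * d p]; rewrite scaler_sumr.
by apply: eq_bigr => p _; rewrite ffunE scalerA.
Qed.

Lemma inRN n (v : FV n) : inR v -> inR (- v).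
Proof. by move=> h; rewrite -scaleN1r; apply: inRZ. Qed.

Lemma inRB n (v w : FV n) : inR v -> inR w -> inR (v - w).
Proof. by move=> hv hw; apply: inRD => //; apply: inRN. Qed.

Lemma inR_sum n (I : finType) (F : I -> FV n) : (forall i, inR (F i)) -> inR (\sum_i F i).
Proof. move=> h; apply: big_ind => //; [exact: inR0 | exact: inRD]. Qed.

Lemma inR_rel n (u : tableau n) b : colstab u b -> inR (Defs.rel u b).
Proof.
move=> hc; exists [ffun p => ((p == (u, b)) : nat)%:R].
rewrite (bigD1 (u, b)) //= ffunE eqxx scale1r big1 ?addr0 // => p /andP [_ hp].
by rewrite ffunE (negbTE hp) scale0r.
Qed.

Lemma inR_gen n (u : tableau n) (g : {perm 'I_(N n)}) :
  (forall k, Defs.col (g k) = Defs.col k) ->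
  inR (e u - (-1) ^+ (odd_perm g) *: e (g * u)%g).
Proof.
move=> hg.
have -> : e u - (-1) ^+ (odd_perm g) *: e (g * u)%g = Defs.rel u (u^-1 * g * u)%g.
  rewrite /Defs.rel !odd_permM odd_permV.
  have -> : Defs.act (u^-1 * g * u)%g u = (g * u)%g by rewrite /Defs.act !mulgA mulgV mul1g.
  by case: (odd_perm u); case: (odd_perm g).
apply: inR_rel; apply/forallP => k; apply/eqP.
by rewrite !permM !permK hg.
Qed.
Import GRing.Theory Num.Theory.
Local Open Scope ring_scope.

Lemma col_cyc n a b (c : 'I_(N n)) : (a <= b)%N -> (b < N n)%N -> (b < n)%N || (n <= a)%N ->
  Defs.col (cyc n a b c) = Defs.col c.
Proof.
move=> h1 h2 h3; rewrite /Defs.col cycE // /cycf.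
have := ltn_ord c; splitifs; simpl; lia.
Qed.

Lemma sum_delta n (f : tableau n -> FV n) w (a : algC) :
  \sum_u (a * ((u == w) : nat)%:R) *: f u = a *: f w.
Proof.
rewrite (bigD1 w) //= eqxx mulr1 big1 ?addr0 // => u hu.
by rewrite (negbTE hu) mulr0 scale0r.
Qed.
Import GRing.Theory Num.Theory.
Local Open Scope ring_scope.

Lemma scC (a b : algC^o) : a *: b = a * b.
Proof. by []. Qed.

Unset Implicit Arguments.

Theorem mainTheorem6 (n : nat) (hn : (2 <= n)%N) :
  forall t : tableau n, in_im_phi_mod_rel (eta t).
Proof.
case: n hn => [|[|m]] // _ t.
pose s (i : nat) : algC := (-1) ^+ (m.+1 - i).
pose c := [ffun u : tableau m.+2 => - ((u == t) : nat)%:R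
   - \sum_(i < m.+2) s i * ((u == phiT t i) : nat)%:R].
have hA : \sum_u c u *: phi u = - phi t - \sum_(i < m.+2) s i *: phi (phiT t i).
  under eq_bigr => u _ do rewrite ffunE scalerBl scaler_suml scaleNr.
  rewrite sumrB sumrN exchange_big /=.
  under [X in _ - X = _]eq_bigr => i _ do rewrite sum_delta.
  congr (- _ - _).
  rewrite (eq_bigr (fun u => (1 * ((u == t) : nat)%:R) *: phi u)) ?sum_delta ?scale1r // => u _; by rewrite mul1r.
have hB1 : forall i : 'I_(m.+2), inR (e t - s i *: e (phiT (phiT t i) m.+1)).
  move=> i; have hi := ltn_ord i; rewrite /phiT mulgA (@gg_last m.+2) //.
  have -> : s i = (-1) ^+ odd_perm (cyc (m.+2) i (m.+2).-1).
    rewrite (@odd_cyc _ (m.+1 - i)) /= ?signr_odd //; rewrite /N /=; lia.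
  apply: (@inR_gen (m.+2) t) => k; apply: col_cyc; rewrite /N /=; lia.
have hB2 : forall (i : 'I_(m.+2)) (k : 'I_(m.+1)),
    inR (e (swap t (cell1 m.+2 i) (cell2 m.+2 k)) + (s i * s k) *: e (phiT (phiT t i) k)).
  move=> i k; have hi := ltn_ord i; have hk := ltn_ord k.
  set g := (cyc (m.+2) i (m.+2).-1 * cyc (m.+2) (m.+2 + k) ((m.+2).-1 + (m.+2).-1))%g.
  have -> : phiT (phiT t i) k = (g * swap t (cell1 m.+2 i) (cell2 m.+2 k))%g.
    by rewrite /phiT /swap mulgA (@gg_mid m.+2) // !mulgA.
  have -> : s i * s k = - (-1) ^+ odd_perm g.
    rewrite odd_permM signr_addb (@odd_cyc _ (m.+1 - i)) /=; try (rewrite /N /=; lia).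
    rewrite (@odd_cyc _ (m.+1 + m.+1 - (m.+2 + k))) /=; try (rewrite /N /=; lia).
    rewrite !signr_odd /s.
    have -> : (m.+1 - k = (m.+1 + m.+1 - (m.+2 + k)).+1)%N by lia.
    by rewrite exprS mulN1r mulrN.
  rewrite scaleNr; apply: inR_gen => x; rewrite permM !col_cyc //; rewrite /N /=; lia.
pose T1 := \sum_(i < m.+2) \sum_(k < m.+1) e (swap t (cell1 m.+2 i) (cell2 m.+2 k)).
pose P1 := \sum_(i < m.+2) s i *: e (phiT t i).
pose Q1 := \sum_(i < m.+2) \sum_(k < m.+1) (s i * s k) *: e (phiT (phiT t i) k).
pose Q2 := \sum_(i < m.+2) s i *: e (phiT (phiT t i) m.+1).
have e1 : eta t = m.+1%:R *: e t - T1.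
  by rewrite /eta /pi11 /T1 /=; congr (_ - _); exact: exchange_big.
have e2 : phi t = e t - P1 by [].
have e3 : \sum_(i < m.+2) s i *: phi (phiT t i) = P1 - (Q1 + Q2).
  rewrite /phi.
  under eq_bigr => i _ do rewrite scalerBr scaler_sumr big_ord_recr /=.
  rewrite sumrB big_split /=; congr (_ - (_ + _)).
    by apply: eq_bigr => i _; apply: eq_bigr => k _; rewrite scalerA.
  by apply: eq_bigr => i _; rewrite subnn expr0 scale1r.
have hE : eta t - \sum_u c u *: phi u =
  \sum_(i < m.+2) (e t - s i *: e (phiT (phiT t i) m.+1))
  - \sum_(i < m.+2) \sum_(k < m.+1)
      (e (swap t (cell1 m.+2 i) (cell2 m.+2 k)) + (s i * s k) *: e (phiT (phiT t i) k)).
  rewrite hA e1 e2 e3 sumrB sumr_const card_ord.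
  under [X in _ = _ - X]eq_bigr => i _ do rewrite big_split.
  rewrite big_split -/T1 -/Q1 -/Q2 -scaler_nat.
  apply/ffunP => u; rewrite !ffunE !scC; ring.
have [d hd] : inR (eta t - \sum_u c u *: phi u).
  rewrite hE; apply: inRB; apply: inR_sum => i //; apply: inR_sum => k //.
exists c, d; by rewrite -hd addrC subrK.
Qed.
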